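(* The groups $\mathbb{G}_r(N)$, for $(r,N)\in\{1,\infty\}\times\{0,2,3,4,\ldots\}$, are pairwise nonisomorphic as topological groups.
   Context: All groups are Abelian. A value on $G$ is $p\colon G\to[0,\infty)$ with $p(x)=0\iff x=0$, $p(-x)=p(x)$, $p(x+y)\leqslant p(x)+p(y)$; it induces the metric $p(x-y)$ and hence a group topology. Class $\mathcal{O}_0$: $\lim_n p(na)/n=0$ for all $a$. $\mathfrak{G}_r(N)$: separable valued Abelian groups of class $\mathcal{O}_0$ with $p\leqslant r$ (vacuous if $r=\infty$) and of exponent $N$ if $N\neq0$. $\mathbb{G}_r(N)$ is the valued Abelian group, unique up to isometric group isomorphism, which (G1) is complete and in $\mathfrak{G}_r(N)$; (G2) for every finite valued Abelian group $(H,+,q)$ (of exponent $N$ if $N\neq0$) with $q\leqslant r$, subgroup $K$, isometric homomorphism $\varphi\colon K\to\mathbb{G}_r(N)$ and $\varepsilon\in(0,1)$, there is a homomorphism $\varphi_\varepsilon\colon H\to\mathbb{G}_r(N)$ with $p(\varphi(x)-\varphi_\varepsilon(x))\leqslant\varepsilon$ on $K$ and $(1-\varepsilon)q\leqslant p\circ\varphi_\varepsilon\leqslant(1+\varepsilon)q$ on $H$; (G3) if $N=0$, finite-order elements are dense. *)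

(* Defs.v *)
From HB Require Import structures.
From mathcomp Require Import all_boot all_order all_algebra.
From mathcomp Require Import Rstruct.
Set Implicit Arguments. Unset Strict Implicit. Unset Printing Implicit Defensive.
Import Order.TTheory GRing.Theory Num.Theory.
Local Open Scope ring_scope.

Notation R := Rdefinitions.R.

Definition is_value (G : zmodType) (p : G -> R) : Prop :=
  (forall x, 0 <= p x) /\
  (forall x, p x = 0 <-> x = 0) /\
  (forall x, p (- x) = p x) /\
  (forall x y, p (x + y) <= p x + p y).

Definition class_O0 (G : zmodType) (p : G -> R) : Prop :=
  forall (a : G) (eps : R), 0 < eps ->
    exists M : nat, forall n : nat, (M <= n)%N -> p (a *+ n) / n%:R < eps.

Definition separable_val (G : zmodType) (p : G -> R) : Prop :=
  exists s : nat -> G, forall (x : G) (eps : R), 0 < eps ->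
    exists k : nat, p (x - s k) < eps.

Definition complete_val (G : zmodType) (p : G -> R) : Prop :=
  forall u : nat -> G,
    (forall eps : R, 0 < eps -> exists M : nat, forall m n : nat,
        (M <= m)%N -> (M <= n)%N -> p (u m - u n) < eps) ->
    exists l : G, forall eps : R, 0 < eps ->
      exists M : nat, forall n : nat, (M <= n)%N -> p (u n - l) < eps.

Inductive radius := r_one | r_inf.

Definition bounded_by (r : radius) (G : zmodType) (p : G -> R) : Prop :=
  match r with
  | r_one => forall x, p x <= 1
  | r_inf => True
  end.

Definition exponent_cond (N : nat) (G : zmodType) : Prop :=
  N <> 0%N -> forall x : G, x *+ N = 0.

Definition is_subgroup (H : zmodType) (K : H -> Prop) : Prop :=
  K 0 /\ (forall x y, K x -> K y -> K (x - y)).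

Definition prop_G1 (r : radius) (N : nat) (G : zmodType) (p : G -> R) : Prop :=
  is_value p /\ complete_val p /\ separable_val p /\ class_O0 p /\
  bounded_by r p /\ exponent_cond N G.

Definition prop_G2 (r : radius) (N : nat) (G : zmodType) (p : G -> R) : Prop :=
  forall (H : finZmodType) (q : H -> R),
    is_value q -> bounded_by r q -> exponent_cond N H ->
    forall (K : H -> Prop), is_subgroup K ->
    forall (phi : H -> G),
      (forall x y, K x -> K y -> phi (x + y) = phi x + phi y) ->
      (forall x y, K x -> K y -> p (phi x - phi y) = q (x - y)) ->
    forall eps : R, 0 < eps -> eps < 1 ->
      exists psi : H -> G,
        (forall x y, psi (x + y) = psi x + psi y) /\
        (forall x, K x -> p (phi x - psi x) <= eps) /\
        (forall x, (1 - eps) * q x <= p (psi x) /\ p (psi x) <= (1 + eps) * q x).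

Definition prop_G3 (N : nat) (G : zmodType) (p : G -> R) : Prop :=
  N = 0%N ->
  forall (x : G) (eps : R), 0 < eps ->
    exists y : G, (exists n : nat, (0 < n)%N /\ y *+ n = 0) /\ p (x - y) < eps.

(* (G, p) is (isometrically isomorphic to) the group G_r(N). *)
Definition is_Gr (r : radius) (N : nat) (G : zmodType) (p : G -> R) : Prop :=
  prop_G1 r N p /\ prop_G2 r N p /\ prop_G3 N p.

Definition val_continuous (G G' : zmodType) (p : G -> R) (p' : G' -> R)
    (f : G -> G') : Prop :=
  forall (x : G) (eps : R), 0 < eps ->
    exists delta : R, 0 < delta /\
      forall y : G, p (y - x) < delta -> p' (f y - f x) < eps.

Definition top_group_isomorphic (G G' : zmodType) (p : G -> R) (p' : G' -> R)
  : Prop :=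
  exists (f : G -> G') (g : G' -> G),
    cancel f g /\ cancel g f /\
    (forall x y, f (x + y) = f x + f y) /\
    val_continuous p p' f /\ val_continuous p' p g.

(* Main.v *)
Require Import Defs.
From HB Require Import structures.
From mathcomp Require Import all_boot all_order all_algebra.
From mathcomp Require Import Rstruct.
From mathcomp Require Import zify ring lra.
Set Implicit Arguments. Unset Strict Implicit.
Import Order.TTheory GRing.Theory Num.Theory.
Local Open Scope ring_scope.

Section Helpers.
Variables (G G' : zmodType).

Lemma hom0 (f : G -> G') : (forall x y, f (x + y) = f x + f y) -> f 0 = 0.
Proof. move=> hf; apply/(addrI (f 0)); by rewrite -hf !addr0. Qed.

Lemma homN (f : G -> G') : (forall x y, f (x + y) = f x + f y) ->
  forall x, f (- x) = - f x.
Proof.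
move=> hf x; apply/(addrI (f x)); by rewrite -hf !subrr (hom0 hf).
Qed.

Lemma homB (f : G -> G') : (forall x y, f (x + y) = f x + f y) ->
  forall x y, f (x - y) = f x - f y.
Proof. by move=> hf x y; rewrite hf (homN hf). Qed.

Lemma homMn (f : G -> G') : (forall x y, f (x + y) = f x + f y) ->
  forall x n, f (x *+ n) = f x *+ n.
Proof.
move=> hf x; elim=> [|n IH]; first by rewrite !mulr0n (hom0 hf).
by rewrite !mulrS hf IH.
Qed.

Lemma mulrn_mod (x : G) (d k : nat) : x *+ d = 0 -> x *+ (k %% d) = x *+ k.
Proof.
move=> hx; rewrite {2}(divn_eq k d) mulrnDr mulnC mulrnA hx mul0rn add0r.
by [].
Qed.

Lemma val_p0 (p : G -> R) : is_value p -> p 0 = 0.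
Proof. by case=> _ [h _]; apply/h. Qed.

End Helpers.

Lemma Zp_mulrn_n (n : nat) (x : 'I_n.+1) : x *+ n.+1 = 0.
Proof. by apply/val_inj; rewrite Zp_mulrn /= modnMl. Qed.

Lemma mx_mulrn (V : zmodType) m n (v : 'M[V]_(m, n)) i j k :
  (v *+ k) i j = v i j *+ k.
Proof. elim: k => [|k IH]; first by rewrite !mulr0n mxE. by rewrite !mulrS mxE IH. Qed.
Definition discr (k : nat) (c : R) (h : 'I_k.+2) : R := if h == 0 then 0 else c.

Lemma discr_value k c : 0 < c -> is_value (@discr k c).
Proof.
move=> c0; rewrite /discr; split; [|split; [|split]].
- by move=> x; case: (x == 0) => //; apply: ltW.
- move=> x; case: eqP => [->|hx]; first by [].
  split=> h; last by case: hx.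
  by move: c0; rewrite h ltxx.
- by move=> x; rewrite oppr_eq0.
- move=> x y; case: (eqVneq x 0) => [->|hx]; first by rewrite add0r; case: (y == 0); lra.
  case: (eqVneq y 0) => [->|hy]; first by rewrite addr0; case: (x == 0); lra.
  case: (x + y == 0); lra.
Qed.

Lemma order_elem (r : radius) (N : nat) (G : zmodType) (p : G -> R) (k : nat) (c : R) :
  is_value p -> prop_G2 r N p -> (N = 0%N \/ (k.+2 %| N)%N) -> 0 < c ->
  bounded_by r (@discr k c) ->
  exists y : G, y *+ k.+2 = 0 /\ forall j, (0 < j < k.+2)%N -> c / 2 <= p (y *+ j).
Proof.
move=> pv G2 hN c0 hb.
have hexp : exponent_cond N 'I_k.+2.
  move=> N0 x; case: hN => // hd; apply/val_inj; rewrite Zp_mulrn /=.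
  by apply/eqP; apply: dvdn_mull.
have hK : is_subgroup (fun h : 'I_k.+2 => h = 0).
  by split=> // x y -> ->; rewrite subr0.
have p0 := val_p0 pv.
have hA : forall x y : 'I_k.+2, x = 0 -> y = 0 -> (0:G) = 0 + 0 by move=> *; rewrite addr0.
have hI : forall x y : 'I_k.+2, x = 0 -> y = 0 -> p (0 - 0) = discr c (x - y).
  by move=> x y -> ->; rewrite !subr0 p0 /discr eqxx.
have e0 : (0:R) < 1/2 by lra.
have e1 : (1/2:R) < 1 by lra.
have [psi [psiA [_ psiB]]] := G2 _ _ (discr_value k c0) hb hexp _ hK (fun _ => 0) hA hI _ e0 e1.
exists (psi 1); split.
  by rewrite -(homMn psiA) Zp_mulrn_n (hom0 psiA).
move=> j hj; rewrite -(homMn psiA).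
have [h1 _] := psiB (1 *+ j).
suff hq : discr c (1 *+ j : 'I_k.+2) = c by rewrite hq in h1; lra.
rewrite /discr; case: eqP => // /(congr1 val); rewrite Zp_mulrn /= mul1n modn_small.
  by move=> j0; move: hj; rewrite j0.
by case/andP: hj.
Qed.

Lemma halving (N : nat) (G : zmodType) (p : G -> R) :
  is_value p -> bounded_by r_one p -> exponent_cond N G -> prop_G2 r_one N p ->
  forall (x : G) n, (0 < n)%N -> x *+ n = 0 -> forall eps : R, 0 < eps -> eps < 1 ->
  exists y z : G, (exists m, (0 < m)%N /\ y *+ m = 0) /\
    (exists m, (0 < m)%N /\ z *+ m = 0) /\
    p y <= (1 + eps) * (p x / 2) /\ p z <= (1 + eps) * (p x / 2) /\
    p (x - (y + z)) <= eps.
Proof.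
move=> pv pb Gexp G2 x n n0 xn eps e0 e1.
have exP : exists m, (0 < m)%N && (x *+ m == 0) by exists n; rewrite n0 xn eqxx.
case: (ex_minnP exP) => d'; case: d' => // d /andP[_ /eqP xd] dmin.
have hmin : forall j, (j < d.+1)%N -> x *+ j = 0 -> j = 0%N.
  move=> j hj hx; case: j hj hx => // j hj hx.
  by have := dmin j.+1; rewrite hx eqxx /= => /(_ isT); lia.
pose phi := fun (a : 'I_d.+1) => x *+ (nat_of_ord a).
have phiA : forall a b, phi (a + b) = phi a + phi b.
  by move=> a b; rewrite /phi /= mulrn_mod // mulrnDr.
have p0 := val_p0 pv.
case: (pv) => pge [pz [pN pT]].
pose w := fun a => p (phi a).
have w0 : w 0 = 0 by rewrite /w /phi /= mulr0n p0.
have wN : forall a, w (- a) = w a by move=> a; rewrite /w (homN phiA) pN.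
have wT : forall a b, w (a + b) <= w a + w b by move=> a b; rewrite /w phiA pT.
have wz : forall a, w a = 0 -> a = 0.
  move=> a /pz ha; apply/val_inj => /=; exact: hmin (ltn_ord a) ha.
have wge : forall a, 0 <= w a by move=> a; apply: pge.
have wle : forall a, w a <= 1 by move=> a; apply: pb.
pose q := fun v : 'rV['I_d.+1]_2 => (w (v ord0 ord0) + w (v ord0 ord_max)) / 2.
have qv : is_value q.
  rewrite /q; split; [|split; [|split]].
  - by move=> v; have := wge (v ord0 ord0); have := wge (v ord0 ord_max); lra.
  - move=> v; split=> [hv|->]; last by rewrite !mxE w0; lra.
    have h1 : w (v ord0 ord0) = 0.
      by have := wge (v ord0 ord0); have := wge (v ord0 ord_max); lra.
    have h2 : w (v ord0 ord_max) = 0.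
      by have := wge (v ord0 ord0); have := wge (v ord0 ord_max); lra.
    apply/matrixP => i j; rewrite (ord1 i) mxE.
    case: j => [[|[|j]] hj] //.
    + have -> : Ordinal hj = ord0 by apply/val_inj.
      exact: wz.
    + have -> : Ordinal hj = ord_max by apply/val_inj.
      exact: wz.
  - by move=> v; rewrite !mxE !wN.
  - move=> u v; rewrite !mxE.
    have := wT (u ord0 ord0) (v ord0 ord0); have := wT (u ord0 ord_max) (v ord0 ord_max).
    lra.
have qb : bounded_by r_one q.
  by move=> v; rewrite /q; have := wle (v ord0 ord0); have := wle (v ord0 ord_max); lra.
have qexp : exponent_cond N 'rV['I_d.+1]_2.
  move=> N0 v.
  have dN : (d.+1 %| N)%N.
    apply/eqP; apply: hmin; first exact: ltn_pmod.
    by rewrite mulrn_mod // Gexp.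
  apply/matrixP => i j; rewrite mx_mulrn mxE; apply/val_inj; rewrite Zp_mulrn /=.
  by apply/eqP; apply: dvdn_mull.
pose K := fun v : 'rV['I_d.+1]_2 => v ord0 ord0 = v ord0 ord_max.
have hK : is_subgroup K.
  by split; [rewrite /K !mxE | move=> u v; rewrite /K !mxE => -> ->].
pose phiH := fun v : 'rV['I_d.+1]_2 => phi (v ord0 ord0).
have hA : forall u v, K u -> K v -> phiH (u + v) = phiH u + phiH v.
  by move=> u v _ _; rewrite /phiH mxE phiA.
have hI : forall u v, K u -> K v -> p (phiH u - phiH v) = q (u - v).
  move=> u v; rewrite /K /phiH /q !mxE => <- <-.
  rewrite -(homB phiA) /w; lra.
have [psi [psiA [psiK psiB]]] := G2 _ _ qv qb qexp _ hK phiH hA hI _ e0 e1.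
pose one := (inZp 1 : 'I_d.+1).
have wone : w one = p x by rewrite /w /phi /= mulrn_mod // mulr1n.
pose ea := \row_(j < 2) (if j == ord0 then one else 0).
pose eb := \row_(j < 2) (if j == ord0 then 0 else one).
have ord_fin : forall v : 'rV['I_d.+1]_2, psi v *+ d.+1 = 0.
  move=> v; rewrite -(homMn psiA).
  have -> : v *+ d.+1 = 0.
    by apply/matrixP => i j; rewrite mx_mulrn Zp_mulrn_n mxE.
  exact: (hom0 psiA).
exists (psi ea), (psi eb); split; first by exists d.+1.
split; first by exists d.+1.
have qa : q ea = p x / 2 by rewrite /q !mxE /= w0 wone; lra.
have qb' : q eb = p x / 2 by rewrite /q !mxE /= w0 wone; lra.
split; first by have [_ h] := psiB ea; rewrite qa in h.
split; first by have [_ h] := psiB eb; rewrite qb' in h.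
have Ke : K (ea + eb) by rewrite /K !mxE /= addr0 add0r.
have := psiK _ Ke; rewrite psiA /phiH !mxE /= addr0.
suff -> : phi one = x by [].
by rewrite /phi /= mulrn_mod // mulr1n.
Qed.

Lemma approx (r : radius) (N : nat) (G : zmodType) (p : G -> R) :
  is_Gr r N p -> forall (x : G) (eps : R), 0 < eps ->
  exists y, (exists m, (0 < m)%N /\ y *+ m = 0) /\ p (x - y) < eps.
Proof.
case=> [[pv [_ [_ [_ [_ Gexp]]]]] [_ G3]] x eps e0.
case: (eqVneq N 0%N) => [N0|N0]; first exact: G3.
exists x; split; last by rewrite subrr (val_p0 pv).
by exists N; split; [rewrite lt0n | apply: Gexp; apply/eqP].
Qed.

Lemma bern (k : nat) : 1 + k%:R / 2 <= (3/2 : R) ^+ k.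
Proof.
elim: k => [|k IH]; first by rewrite expr0; lra.
rewrite exprS -natr1; have : 0 <= k%:R :> R := ler0n _ _; nra.
Qed.

Lemma exists_k (N : nat) : N <> 1%N -> exists k, N = 0%N \/ (k.+2 %| N)%N.
Proof. by case: N => [|[|n]] // _; [exists 0%N; left | exists n; right]. Qed.

Lemma iso_sym (G G' : zmodType) (p : G -> R) (p' : G' -> R) :
  top_group_isomorphic p p' -> top_group_isomorphic p' p.
Proof.
case=> f [g [fK [gK [fA [fc gc]]]]]; exists g, f; split=> //; split=> //.
split=> //; move=> a b; apply: (can_inj fK); by rewrite fA !gK.
Qed.

Lemma r_one_inf (N N' : nat) (G G' : zmodType) (p : G -> R) (p' : G' -> R) :
  N' <> 1%N -> is_Gr r_one N p -> is_Gr r_inf N' p' -> top_group_isomorphic p p' -> False.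
Proof.
move=> hN' HG HG' [f [g [fK [gK [fA [fc _]]]]]].
have HG0 := HG.
case: HG => [[pv [_ [_ [_ [pb Gexp]]]]] [G2 _]].
case: HG' => [[pv' _] [G2' _]].
case: (pv) => pge [_ [pN pT]].
case: (pv') => pge' [_ [_ pT']].
have [δ [δ0 hδ]] := fc 0 1 ltr01.
have hf : forall y, p y < δ -> p' (f y) < 1.
  by move=> y; have := hδ y; rewrite subr0 (hom0 fA) subr0.
have [ε [ε0 [εδ [ε3 ε1]]]] : exists ε : R, 0 < ε /\ ε <= δ/2 /\ ε <= 1/3 /\ ε < 1.
  by case: (lerP (δ/2) (1/3)) => h; [exists (δ/2) | exists (1/3)]; lra.
have Q : forall k (x : G), (exists m, (0 < m)%N /\ x *+ m = 0) ->
    p x <= ε * (3/2)^+k -> p' (f x) <= 3^+k.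
  elim => [|k IH] x [m [m0 xm]] hx.
  - rewrite expr0; apply/ltW/hf; move: hx; rewrite expr0; lra.
  - have [y [z [hy [hz [py [pz he]]]]]] := halving pv pb Gexp G2 m0 xm ε0 ε1.
    have P0 : 0 <= (3/2:R)^+k by apply: exprn_ge0; lra.
    have px0 := pge x.
    have hy' : p y <= ε * (3/2)^+k by move: hx; rewrite exprS => hx; nra.
    have hz' : p z <= ε * (3/2)^+k by move: hx; rewrite exprS => hx; nra.
    have := IH y hy hy'; have := IH z hz hz'.
    have he' : p' (f (x - (y + z))) < 1 by apply: hf; lra.
    have -> : f x = f (x - (y + z)) + (f y + f z) by rewrite -!fA subrK.
    have := pT' (f (x - (y + z))) (f y + f z); have := pT' (f y) (f z).
    have : 1 <= (3:R)^+k by apply: exprn_ege1; lra.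
    rewrite exprS; lra.
have [K hK] : exists K : nat, 2 <= ε * (3/2)^+K.
  have t0 : 0 <= 4 / ε by apply: divr_ge0; lra.
  exists (Num.Def.archi_bound (4/ε)); have := archi_boundP t0.
  have ht : 4 / ε * ε = 4 by rewrite divfK //; apply/eqP => h; move: ε0; rewrite h ltxx.
  have := bern (Num.Def.archi_bound (4 / ε)).
  move: ht; set t := 4 / ε; set a := (Num.Def.archi_bound t)%:R => ht hb ha.
  have h1 : ε * t < ε * a by rewrite ltr_pM2l.
  have h2 : ε * (1 + a / 2) <= ε * (3 / 2) ^+ Num.Def.archi_bound t by rewrite ler_pM2l.
  set P := (3/2 : R)^+ _ in h2 *.
  clearbody P a t; clear -ht h1 h2 ε0; lra.
have bnd : forall x, p' (f x) <= 3^+K + 1.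
  move=> x; have [y [hy hxy]] := approx HG0 x ε0.
  have py : p y <= p x + p (x - y).
    have {1}-> : y = x + - (x - y) by rewrite opprB addrC subrK.
    by rewrite -(pN (x - y)); apply: pT.
  have := pb x; move=> /= pbx.
  have := Q K y hy ltac:(lra).
  have -> : f x = f y + f (x - y) by rewrite -fA addrC subrK.
  have := hf (x - y) ltac:(lra).
  have := pT' (f y) (f (x - y)); lra.
have [k hk] := exists_k hN'.
have B0 : 0 <= (3:R)^+K by apply: exprn_ge0; lra.
have c0 : (0:R) < 4 * (3^+K + 1) by lra.
have [y [_ hy]] := order_elem (k := k) pv' G2' hk c0 I.
have := hy 1%N isT; rewrite mulr1n.
have := bnd (g y); rewrite gK; lra.
Qed.

Lemma Npart (r r' : radius) (N N' : nat) (G G' : zmodType) (p : G -> R) (p' : G' -> R) :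
  N <> 1%N -> N' <> 1%N -> is_Gr r N p -> is_Gr r' N' p' -> top_group_isomorphic p p' ->
  N' <> 0%N -> N <> 0%N /\ (N' %| N)%N.
Proof.
move=> hN hN' [[pv [_ [_ [_ [pb Gexp]]]]] [G2 _]] [[pv' [_ [_ [_ [pb' Gexp']]]]] [G2' _]].
move=> [f [g [fK [gK [fA _]]]]] N'0.
have gA : forall a b, g (a + b) = g a + g b.
  by move=> a b; apply: (can_inj fK); rewrite fA !gK.
have hb1 : forall r k, bounded_by r (@discr k 1).
  by case => //= k h; rewrite /discr; case: (h == 0); lra.
have N0 : N <> 0%N.
  move=> N0.
  have [y [_ hy]] := order_elem (k := N'.-1) pv G2 (or_introl N0) ltr01 (hb1 r _).
  have h : y *+ N' = 0.
    by apply: (can_inj fK); rewrite (homMn fA) Gexp' // (hom0 fA).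
  have h2 : (0 < N' < N'.-1.+2)%N by lia.
  have := hy N' h2; rewrite h (val_p0 pv); lra.
split=> //.
have [k Nk] : exists k, N' = k.+2 by exists N'.-2; lia.
have hdk : N' = 0%N \/ (k.+2 %| N')%N by right; rewrite Nk.
have [z [zk hz]] := order_elem (k := k) pv' G2' hdk ltr01 (hb1 r' k).
have yN' : g z *+ N' = 0 by rewrite -(homMn gA) Nk zk (hom0 gA).
have h : g z *+ (N %% N') = 0 by rewrite mulrn_mod // Gexp.
have h' : z *+ (N %% N') = 0.
  by apply: (can_inj gK); rewrite (homMn gA) h (hom0 gA).
rewrite /dvdn; apply/eqP; case: (posnP (N %% N')) => [//|hpos].
have h2 : (0 < N %% N' < k.+2)%N by rewrite hpos /= -Nk ltn_pmod //; lia.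
exfalso; have := hz _ h2; rewrite h' (val_p0 pv'); lra.
Qed.

Theorem corollary5p8 (r r' : radius) (N N' : nat)
    (hN : N <> 1%N) (hN' : N' <> 1%N)
    (G G' : zmodType) (p : G -> R) (p' : G' -> R) :
  is_Gr r N p -> is_Gr r' N' p' ->
  top_group_isomorphic p p' ->
  r = r' /\ N = N'.
Proof.
move=> HG HG' iso; have iso' := iso_sym iso.
split.
- case: r HG; case: r' HG' => // HG' HG; exfalso.
  + exact: r_one_inf hN' HG HG' iso.
  + exact: r_one_inf hN HG' HG iso'.
- case: (eqVneq N' 0%N) => [N'0|/eqP N'0].
  + case: (eqVneq N 0%N) => [->//|/eqP N0].
    by have [] := Npart hN' hN HG' HG iso' N0.
  + have [N0 d1] := Npart hN hN' HG HG' iso N'0.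
    have [_ d2] := Npart hN' hN HG' HG iso' N0.
    by apply/eqP; rewrite eqn_dvd d1 d2.
Qed.
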